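(* In the roundabout exploration process described in the context, for every $t\in[N]$, no two active agents are in the same state after step $t$; i.e., for distinct $a_i,a_j\in A(t)$ we have $s_i(t)\neq s_j(t)$.
   Context: Let $n\ge 2$ and $k$ be natural numbers, $T$ a tree on an $n$-element vertex set $V$, and $N=2(n-1)$. Fix a root $r$ and a DFS tour of $T$ starting and ending at $r$ that traverses each edge of $T$ exactly twice, giving a cyclic vertex sequence $(v_1,\dots,v_N,v_{N+1})$ with $v_{N+1}=v_1=r$, and tour edges $e_i=\{v_i,v_{i+1}\}$ for $i\in[N]$ (each an edge of $T$). For $i,j\in[N]$ the circular interval $[\![i,j]\!]$ is $\{i,i+1,\dots,j\}$ if $i\le j$ and $\{i,\dots,N,1,\dots,j\}$ if $i>j$; $[\![i,j[\![$ denotes $[\![i,j]\!]\setminus\{j\}$. Let $\langle G_1,\dots,G_N\rangle$ be graphs on $V$, each containing all but at most $k$ edges of $T$. Roundabout exploration process: there are agents $a_1,\dots,a_N$ with initial states $s_i(0)=i$. For steps $t=1,\dots,N$: (Movement) for every $i\in[N]$, if $s_i(t-1)=q$ then $s_i(t)=(q\bmod N)+1$ if $e_q\in E(G_t)$, and $s_i(t)=q$ otherwise. Let $D_i(t)=[\![i,s_i(t)]\!]$ (the visited states) and $D_i(0)=\{i\}$. (Elimination) Let $A(0)=\{a_1,\dots,a_N\}$; $A(t)$ is obtained from $A(t-1)$ by repeatedly removing an arbitrary agent $a_i$ of the current set that is redundant, i.e. $D_i(t)\subseteq\bigcup D_j(t)$ over the other agents $a_j$ of the current set, until no redundant agent remains.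 The agents in $A(t)$ are called active after step $t$. *)

(* Defs.v *)
From mathcomp Require Import all_boot.
Set Implicit Arguments. Unset Strict Implicit. Unset Printing Implicit Defensive.

(* Tour positions, agents and states are natural numbers in 1..N, as in the paper. *)

Definition cint (N i j : nat) : pred nat :=
  fun x => if i <= j then (i <= x <= j) else (i <= x <= N) || (1 <= x <= j).

Definition tour_edge (V : finType) (v : nat -> V) (q : nat) : {set V} :=
  [set v q; v q.+1].

Fixpoint state (V : finType) (N : nat) (v : nat -> V) (G : nat -> {set {set V}})
  (i t : nat) : nat :=
  match t with
  | 0 => i
  | t'.+1 => let q := state N v G i t' in
             if tour_edge v q \in G t then (q %% N).+1 else q
  end.

Definition visited (V : finType) (N : nat) (v : nat -> V) (G : nat -> {set {set V}})
  (t i : nat) : pred nat := cint N i (state N v G i t).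

Definition redundant (D : nat -> pred nat) (A : pred nat) (i : nat) : Prop :=
  A i /\ forall x, D i x -> exists j, [/\ A j, j <> i & D j x].

Definition elim_step (D : nat -> pred nat) (A A' : pred nat) : Prop :=
  exists i, redundant D A i /\ forall x, A' x = A x && (x != i).

Inductive elim_steps (D : nat -> pred nat) : pred nat -> pred nat -> Prop :=
  | elim_refl A : elim_steps D A A
  | elim_cons A A' A'' : elim_step D A A' -> elim_steps D A' A'' -> elim_steps D A A''.

Definition elim_result (D : nat -> pred nat) (A A' : pred nat) : Prop :=
  elim_steps D A A' /\ forall i, ~ redundant D A' i.

Definition is_tree (V : finType) (ET : {set {set V}}) : Prop :=
  [/\ forall e, e \in ET -> #|e| = 2,
      forall x y : V, connect (fun a b => [set a; b] \in ET) x y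
    & #|ET| = #|V| - 1].

Definition dfs_tour (V : finType) (ET : {set {set V}}) (N : nat) (r : V)
  (v : nat -> V) : Prop :=
  [/\ v 1 = r, v N.+1 = r,
      forall q, 1 <= q <= N -> tour_edge v q \in ET
    & forall e, e \in ET -> count (fun q => tour_edge v q == e) (iota 1 N) = 2].

(* Main.v *)
Require Import Defs.
From mathcomp Require Import all_boot.
From mathcomp Require Import zify.

Lemma cint_nest (N i j s : nat) : 1 <= i -> 1 <= j ->
  (forall x, cint N i s x -> cint N j s x) \/ (forall x, cint N j s x -> cint N i s x).
Proof.
move=> Hi Hj; rewrite /cint.
case: (leqP i s) => His; case: (leqP j s) => Hjs;
case: (leqP i j) => Hij.
all: first [ by left => x; lia | by right => x; lia ].
Qed.

Lemma elim_steps_sub {D A A'} : elim_steps D A A' -> forall x, A' x -> A x.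
Proof.
elim=> // B B' B'' [i [_ HB]] _ IH x /IH.
by rewrite HB => /andP[].
Qed.

Theorem lemma5 (V : finType) (n k N : nat) (ET : {set {set V}}) (r : V)
  (v : nat -> V) (G : nat -> {set {set V}}) (A : nat -> pred nat) :
  2 <= n -> #|V| = n -> is_tree ET -> N = 2 * (n - 1) ->
  dfs_tour ET N r v ->
  (forall t, 1 <= t <= N ->
     (forall e, e \in G t -> #|e| = 2) /\ #|ET :\: G t| <= k) ->
  (forall x, A 0 x = (1 <= x <= N)) ->
  (forall t, 1 <= t <= N -> elim_result (visited N v G t) (A t.-1) (A t)) ->
  forall t, 1 <= t <= N ->
  forall i j, A t i -> A t j -> i <> j ->
  state N v G i t <> state N v G j t.
Proof.
move=> _ _ _ _ _ _ HA0 HE t Ht i j Ai Aj Hij Hs.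
have pos : forall u, u <= N -> forall x, A u x -> 1 <= x.
  elim=> [_ x|u IH Hu x Hx]; first by rewrite HA0 => /andP[].
  have Hu1 : 1 <= u.+1 <= N by lia.
  have Hu2 : u <= N by lia.
  have [H1 _] := HE u.+1 Hu1.
  apply: (IH Hu2 x). exact: (elim_steps_sub H1 x Hx).
have [_ Hnr] := HE t Ht.
have Ht' : t <= N by lia.
have Hi1 := pos t Ht' i Ai.
have Hj1 := pos t Ht' j Aj.
case: (@cint_nest N i j (state N v G i t) Hi1 Hj1) => Hsub.
- apply: (Hnr i); split=> // x Dx; exists j; split=> //; first by move=> E; apply: Hij.
  by rewrite /visited -Hs; apply: Hsub.
- apply: (Hnr j); split=> // x Dx; exists i; split=> //.
  by rewrite /visited; apply: Hsub; rewrite Hs.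
Qed.
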